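(* Let $F$ be the fractal cube defined in the context, and let $Q=\{\mathcal K_\alpha:\alpha\in\{0,1\}^\infty\}\subset C(\mathbb R^3)$ be the set of its connected components. Then $Q$ is the self-similar set (attractor) in $C(\mathbb R^3)$ generated by the two contractions $\widetilde T_0,\widetilde T_1$, i.e. $Q=\widetilde T_0(Q)\cup\widetilde T_1(Q)$. Moreover there is a Hölder homeomorphism $\varphi:Q\to C_{1/3}$ onto the middle-third Cantor set $C_{1/3}\subset[0,1]$ which induces an isomorphism of the self-similar structures, i.e. $\varphi\circ\widetilde T_0=S_0\circ\varphi$ and $\varphi\circ\widetilde T_1=S_1\circ\varphi$ on $Q$, where $S_0(x)=x/3$ and $S_1(x)=x/3+2/3$.
   Context: Let $I=[0,1]^3$. Let $\mathcal D_0=\{(i,2,2),(2,i,2),(2,2,i): i=0,1,2,3,4\}\subset\{0,\ldots,4\}^3$ (the ''Cross'', $13$ elements) and $\mathcal D_1=\{d\in\{0,\ldots,4\}^3:\ \text{at least two coordinates of } d \text{ lie in }\{0,4\}\}$ (the ''Frame'': the $44$ unit cubes lying along the edges of $[0,5]^3$). Put $\mathcal D=\mathcal D_0\cup\mathcal D_1$ (a disjoint union) and let $F\subset\mathbb R^3$ be the unique non-empty compact set with $F=\frac{F+\mathcal D}{5}=\bigcup_{d\in\mathcal D}\frac{F+d}{5}$. For $i=0,1$ define the Hutchinson operator $T_i(A)=\frac{\mathcal D_i+A}{5}=\bigcup_{d\in\mathcal D_i}\frac{d+A}{5}$ on sets $A\subset\mathbb R^3$, and for a finite word $\alpha_1\cdots\alpha_k\in\{0,1\}^k$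 put $T_{\alpha_1\cdots\alpha_k}=T_{\alpha_1}\circ\cdots\circ T_{\alpha_k}$. For an infinite word $\alpha=\alpha_1\alpha_2\ldots\in\{0,1\}^\infty$ put $\mathcal K_\alpha=\bigcap_{k\ge1}T_{\alpha_1\cdots\alpha_k}(I)$; each $\mathcal K_\alpha$ is a connected component of $F$ and $F=\bigcup_{\alpha}\mathcal K_\alpha$. $C(\mathbb R^3)$ denotes the hyperspace of non-empty compact subsets of $\mathbb R^3$ with the Hausdorff metric, and $\widetilde T_i:C(\mathbb R^3)\to C(\mathbb R^3)$, $\widetilde T_i(A)=T_i(A)$, is a contraction with Lipschitz constant $1/5$. *)

(* Defs.v *)
(* Points of R^3 are triples (x, y, z) : R * R * R
   (product topology = Euclidean topology). *)
From HB Require Import structures.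
From mathcomp Require Import all_boot all_order all_algebra.
From mathcomp Require Import all_classical all_reals all_analysis.
Set Implicit Arguments. Unset Strict Implicit. Unset Printing Implicit Defensive.
Import Order.TTheory GRing.Theory Num.Theory.
Import numFieldNormedType.Exports.
Local Open Scope classical_set_scope.
Local Open Scope ring_scope.

Notation pt R := (R * R * R)%type.

Section Fractal.
Variable R : realType.

Definition in04 (n : nat) : bool := (n == 0%N) || (n == 4%N).

Definition Dcross (d : nat * nat * nat) : bool :=
  let: (a, b, c) := d in
  [|| [&& (a < 5)%N, b == 2%N & c == 2%N],
      [&& a == 2%N, (b < 5)%N & c == 2%N]
    | [&& a == 2%N, b == 2%N & (c < 5)%N]].

Definition Dframe (d : nat * nat * nat) : bool :=
  let: (a, b, c) := d in
  [&& (a < 5)%N, (b < 5)%N, (c < 5)%N &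
      [|| in04 a && in04 b, in04 a && in04 c | in04 b && in04 c]].

Definition Dig (i : bool) : nat * nat * nat -> bool :=
  if i then Dframe else Dcross.

Definition T (i : bool) (A : set (pt R)) : set (pt R) :=
  [set p | exists d : nat * nat * nat, Dig i d /\ exists a : pt R, A a /\
     p = (((d.1.1)%:R + a.1.1) / 5, ((d.1.2)%:R + a.1.2) / 5,
          ((d.2)%:R + a.2) / 5)].

Definition unit_cube : set (pt R) :=
  [set p | (0 <= p.1.1 <= 1) /\ (0 <= p.1.2 <= 1) /\ (0 <= p.2 <= 1)].

(* infinite words alpha = alpha_1 alpha_2 ... encoded as alpha 0, alpha 1, ... *)
(* Tw alpha k A = T_{alpha_1} o ... o T_{alpha_k} (A) *)
Fixpoint Tw (alpha : nat -> bool) (k : nat) (A : set (pt R)) : set (pt R) :=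
  match k with
  | 0%N => A
  | k'.+1 => Tw alpha k' (T (alpha k') A)
  end.

Definition Kc (alpha : nat -> bool) : set (pt R) :=
  [set p | forall k : nat, Tw alpha k.+1 unit_cube p].

Definition Qc : set (set (pt R)) := [set A | exists alpha, A = Kc alpha].

Definition edist (p q : pt R) : R :=
  Num.sqrt ((p.1.1 - q.1.1) ^+ 2 + (p.1.2 - q.1.2) ^+ 2 + (p.2 - q.2) ^+ 2).

Definition hausdorff (A B : set (pt R)) : R :=
  inf [set r : R | 0 <= r /\
         (forall a, A a -> exists2 b, B b & edist a b <= r) /\
         (forall b, B b -> exists2 a, A a & edist a b <= r)].

Definition S0 (x : R) : R := x / 3.
Definition S1 (x : R) : R := x / 3 + 2 / 3.

Fixpoint cantor_step (n : nat) : set R :=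
  match n with
  | 0%N => [set x | 0 <= x <= 1]
  | n'.+1 => (S0 @` cantor_step n') `|` (S1 @` cantor_step n')
  end.

Definition cantor : set R := [set x | forall n, cantor_step n x].

End Fractal.

(* Main.v *)
Require Import Defs.
From HB Require Import structures.
From mathcomp Require Import all_boot all_order all_algebra.
From mathcomp Require Import all_classical all_reals all_analysis.
From mathcomp Require Import ring lra zify.
Import Order.TTheory GRing.Theory Num.Theory.
Import numFieldNormedType.Exports.
Local Open Scope classical_set_scope.
Local Open Scope ring_scope.


Section Aux.
Context {R : realType}.
Local Notation I := (@unit_cube R).
Implicit Types (A B : set (pt R)) (p : pt R).

Definition fd (d : nat * nat * nat) (a : pt R) : pt R :=
  (((d.1.1)%:R + a.1.1) / 5, ((d.1.2)%:R + a.1.2) / 5, ((d.2)%:R + a.2) / 5).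
Definition ginv (d : nat * nat * nat) (p : pt R) : pt R :=
  (5 * p.1.1 - (d.1.1)%:R, 5 * p.1.2 - (d.1.2)%:R, 5 * p.2 - (d.2)%:R).

Lemma fdK d (x : pt R) : ginv d (fd d x) = x.
Proof. case: x => [[x y] z]; rewrite /fd /ginv /=; congr (_,_,_); by field. Qed.
Lemma ginvK d p : fd d (ginv d p) = p.
Proof. case: p => [[x y] z]; rewrite /fd /ginv /=; congr (_,_,_); by field. Qed.

Lemma TE i A p : T i A p <-> exists2 d, Dig i d & A (ginv d p).
Proof.
split.
- by case=> d [Dd [a [Aa ->]]]; exists d => //; rewrite fdK.
- by case=> d Dd Ap; exists d; split => //; exists (ginv d p); split => //; exact: (esym (ginvK d p)).
Qed.

Lemma Dig_lt5 {i d} : Dig i d -> [/\ (d.1.1 < 5)%N, (d.1.2 < 5)%N & (d.2 < 5)%N].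
Proof.
case: d => [[a b] c]; case: i => /=.
- by case/and4P.
- by case/or3P => /and3P [] => [? /eqP-> /eqP->|/eqP-> ? /eqP->|/eqP-> /eqP-> ?].
Qed.

Lemma T_mono i A B : A `<=` B -> T i A `<=` T i B.
Proof. by move=> AB p [d [Dd [a [Aa ->]]]]; exists d; split => //; exists a; split => //; apply: AB. Qed.

Lemma T_I i : T i I `<=` I.
Proof.
move=> p [d [Dd [a [[/andP[a1 a1'] [/andP[a2 a2'] /andP[a3 a3']]] ->]]]].
case: (Dig_lt5 Dd) => h1 h2 h3.
have : (d.1.1 <= 4)%N by []. have : (d.1.2 <= 4)%N by []. have : (d.2 <= 4)%N by [].
rewrite -!(ler_nat R) => e3 e2 e1.
have z1 : 0 <= (d.1.1)%:R :> R by []. have z2 : 0 <= (d.1.2)%:R :> R by [].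
have z3 : 0 <= (d.2)%:R :> R by [].
rewrite /unit_cube /=; split; [|split]; apply/andP; split; lra.
Qed.

Definition sh (a : nat -> bool) := fun n => a n.+1.

Lemma Tw_shift a k A : Tw a k.+1 A = T (a 0%N) (Tw (sh a) k A).
Proof. elim: k a A => [//|k IH] a A. by rewrite /= -IH. Qed.

Lemma Tw_mono a k A B : A `<=` B -> Tw a k A `<=` Tw a k B.
Proof. by elim: k A B => [//|k IH] A B AB /=; apply: IH; apply: T_mono. Qed.

Lemma Tw_I a k : Tw a k I `<=` I.
Proof.
elim: k => [//|k IH] /=; apply: subset_trans IH; apply: Tw_mono; exact: T_I.
Qed.

Lemma Tw_dec {a k m} : (k <= m)%N -> Tw a m I `<=` Tw a k I.
Proof.
elim: m => [|m IH]; first by rewrite leqn0 => /eqP->.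
rewrite leq_eqVlt => /predU1P [->//|km].
apply: subset_trans (IH km) => /=; apply: Tw_mono; exact: T_I.
Qed.

Lemma Kc_I a : @Kc R a `<=` I.
Proof. by move=> p /(_ 0%N); apply: Tw_I. Qed.

Lemma boundK (P : nat -> nat -> Prop) n :
  (forall m k k', (k <= k')%N -> P m k -> P m k') ->
  (forall m, (m < n)%N -> exists k, P m k) -> exists K, forall m, (m < n)%N -> P m K.
Proof.
move=> mono; elim: n => [|n IH] h; first by exists 0%N.
have [K1 HK1] := IH (fun m mn => h m (ltnW mn)).
have [k2 Hk2] := h n (ltnSn n).
exists (maxn K1 k2) => m; rewrite ltnS leq_eqVlt => /predU1P [->|mn].
- by apply: mono Hk2; rewrite leq_maxr.
- by apply: mono (HK1 m mn); rewrite leq_maxl.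
Qed.

Lemma Kc_shift a : @Kc R a = T (a 0%N) (Kc (sh a)).
Proof.
apply/seteqP; split => p.
- move=> Kp; apply: contrapT => nT.
  pose dec m := (m %/ 25, m %/ 5 %% 5, m %% 5)%N.
  pose P m k := Dig (a 0%N) (dec m) -> ~ Tw (sh a) k I (ginv (dec m) p).
  have [K HK] : exists K, forall m, (m < 125)%N -> P m K.
    apply: boundK => [m k k' kk' + Dm Tw'|m _].
      by move=> /(_ Dm); apply; exact: (Tw_dec kk' _ Tw').
    case: (pselect (Dig (a 0%N) (dec m))) => Dm; last by exists 0%N.
    case: (pselect (Kc (sh a) (ginv (dec m) p))) => KK.
      by exfalso; apply: nT; apply/TE; exists (dec m).
    have [k nk] : exists k, ~ Tw (sh a) k.+1 I (ginv (dec m) p).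
      by apply: contrapT => hh; apply: KK => k; apply: contrapT => hk; apply: hh; exists k.
    by exists k.+1.
  have := Kp K; rewrite Tw_shift => /TE [[[x y] z] Dd Tp].
  have [hx hy hz] := Dig_lt5 Dd.
  have hm : (25 * x + 5 * y + z < 125)%N by simpl in *; lia.
  have de : dec (25 * x + 5 * y + z)%N = (x, y, z).
    rewrite /dec; simpl in *; congr (_,_,_); lia.
  by apply: (HK _ hm); rewrite de.
- move=> /TE [d Dd Kg] k; rewrite Tw_shift; apply/TE; exists d => //.
  case: k => [|k]; first exact: Kc_I.
  exact: Kg.
Qed.

End Aux.


Section Digits.
Context {R : realType}.
Context (q : nat) (q1 : (1 < q)%N).

Fixpoint psum (k : nat) (e : nat -> nat) : R :=
  if k is k'.+1 then ((e 0%N)%:R + psum k' (fun j => e j.+1)) / q%:R else 0.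

Definition dig (e : nat -> nat) := forall j, (e j < q)%N.

Lemma q0 : 0 < q%:R :> R.
Proof. by rewrite ltr0n; lia. Qed.
Lemma qn0 : q%:R != 0 :> R.
Proof. by rewrite gt_eqF // q0. Qed.
Lemma qX0 k : 0 < q%:R ^+ k :> R.
Proof. by rewrite exprn_gt0 // q0. Qed.

Lemma psum_ge0 k e : 0 <= psum k e.
Proof.
elim: k e => [//|k IH] e /=; apply: divr_ge0; last exact: ltW q0.
by apply: addr_ge0 => //.
Qed.

Lemma dig_sh {e} : dig e -> dig (fun j => e j.+1).
Proof. by move=> h j. Qed.

Lemma dig_le {e} : dig e -> (e 0%N)%:R + 1 <= q%:R :> R.
Proof. by move=> h; rewrite natr1 ler_nat; apply: h. Qed.

Lemma psum_le1 k e : dig e -> psum k e <= 1.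
Proof.
elim: k e => [//|k IH] e he /=.
rewrite ler_pdivrMr ?q0 // mul1r.
have := IH _ (dig_sh he); have := dig_le he; lra.
Qed.

Lemma psum_le m k e : dig e -> psum m e <= psum k e + (q%:R ^+ k)^-1.
Proof.
elim: k e m => [|k IH] e m he.
  by rewrite expr0 invr1 add0r; apply: psum_le1.
case: m => [|m]; first by rewrite [psum 0 e]/=; apply: addr_ge0; [apply: (psum_ge0 k.+1)|rewrite invr_ge0 ltW // qX0].
rewrite /= exprS invfM.
have := IH (fun j => e j.+1) m (dig_sh he).
set X := psum m _; set Y := psum k _; set Z := _^-1 => h.
have -> : ((e 0%N)%:R + Y) / q%:R + q%:R^-1 * Z = ((e 0%N)%:R + Y + Z) / q%:R by field; exact: qn0.
apply: ler_wpM2r; first by rewrite invr_ge0 ltW // q0.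
lra.
Qed.

Definition dsum (e : nat -> nat) : R := sup (range (fun k => psum k e)).

Lemma dsum_has {e} : dig e -> has_sup (range (fun k => psum k e)).
Proof.
move=> he; split; first by exists (psum 0 e); exists 0%N.
by exists 1 => x [k _ <-]; apply: psum_le1.
Qed.

Lemma dsum_ge k {e} : dig e -> psum k e <= dsum e.
Proof. by move=> he; apply: sup_upper_bound (dsum_has he) _ _; exists k. Qed.

Lemma dsum_le k {e} : dig e -> dsum e <= psum k e + (q%:R ^+ k)^-1.
Proof.
move=> he; apply: ge_sup; first by exists (psum 0 e); exists 0%N.
by move=> x [m _ <-]; apply: psum_le.
Qed.

Lemma dsum_01 {e} : dig e -> 0 <= dsum e <= 1.
Proof.
move=> he; apply/andP; split.
  by apply: le_trans (dsum_ge 0 he).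
by have := dsum_le 0 he; rewrite /= expr0 invr1 add0r.
Qed.

Lemma dsum_uniq e y : dig e ->
  (forall k, psum k e <= y <= psum k e + (q%:R ^+ k)^-1) -> y = dsum e.
Proof.
move=> he hy.
have hk k : `|y - dsum e| <= (q%:R ^+ k)^-1.
  have := hy k; have := dsum_ge k he; have := dsum_le k he.
  move=> h1 h2 /andP[h3 h4]; rewrite ler_norml; apply/andP; split; lra.
apply/eqP; rewrite -subr_eq0; apply: contraT => ne.
set d := `|y - dsum e|.
have d0 : 0 < d by rewrite normr_gt0.
have di0 : 0 < d^-1 by rewrite invr_gt0.
have hk1 := archi_boundP (ltW di0).
set k := Num.Def.archi_bound _ in hk1.
have hk2 : (k < q ^ k)%N by apply: ltn_expl.
have hk3 : d^-1 < q%:R ^+ k.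
  apply: lt_trans hk1 _; rewrite -natrX ltr_nat; exact: hk2.
have h4 := hk k.
have h5 : d * q%:R ^+ k <= 1.
  by rewrite -(ler_pdivlMr _ _ (qX0 k)) mul1r.
have h6 : 1 < d * q%:R ^+ k.
  by rewrite -[X in X < _](divff (lt0r_neq0 d0)) (ltr_pM2l d0).
lra.
Qed.

Lemma dsum_cons e : dig e ->
  dsum e = ((e 0%N)%:R + dsum (fun j => e j.+1)) / q%:R.
Proof.
move=> he; symmetry; apply: dsum_uniq => // k.
have hs := dig_sh he.
case: k => [|k].
  rewrite /= expr0 invr1 add0r; apply/andP; split.
    apply: divr_ge0; last exact: ltW q0.
    by apply: addr_ge0 => //; case/andP: (dsum_01 hs).
  rewrite ler_pdivrMr ?q0 // mul1r.
  have := dig_le he; case/andP: (dsum_01 hs); lra.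
rewrite /= exprS invfM.
have h1 := dsum_ge k hs; have h2 := dsum_le k hs.
set X := dsum _ in h1 h2 *; set Y := psum k _ in h1 h2 *; set Z := _^-1 in h2 *.
have -> : ((e 0%N)%:R + Y) / q%:R + q%:R^-1 * Z = ((e 0%N)%:R + Y + Z) / q%:R by field; exact: qn0.
have qi : 0 <= q%:R^-1 :> R by rewrite invr_ge0 ltW // q0.
by apply/andP; split; apply: ler_wpM2r => //; lra.
Qed.

Lemma psum_ext k e e' : (forall j, (j < k)%N -> e j = e' j) -> psum k e = psum k e'.
Proof.
elim: k e e' => [//|k IH] e e' h /=.
by rewrite (h 0%N) // (IH (fun j => e j.+1) (fun j => e' j.+1)) // => j jk; apply: h.
Qed.

Lemma psum_cons k e : psum k.+1 e = ((e 0%N)%:R + psum k (fun j => e j.+1)) / q%:R.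
Proof. by []. Qed.

Lemma psum_S k e : psum k.+1 e = psum k e + (e k)%:R / q%:R ^+ k.+1.
Proof.
elim: k e => [|k IH] e; first by rewrite /= expr1 addr0 add0r.
rewrite psum_cons (IH (fun j => e j.+1)) psum_cons !exprS.
by field; rewrite ?mulf_neq0 ?expf_neq0 ?qn0.
Qed.

Lemma psum_nat k e : exists N : nat, psum k e * q%:R ^+ k = N%:R.
Proof.
elim: k => [|k [N HN]]; first by exists 0%N; rewrite /= mul0r.
exists (N * q + e k)%N; rewrite psum_S natrD natrM -HN exprS.
by field; rewrite ?mulf_neq0 ?expf_neq0 ?qn0.
Qed.

End Digits.


Section Geo.
Context {R : realType}.
Local Notation I := (@unit_cube R).
Implicit Types (X Y : set (pt R)) (p : pt R).

Definition ey (a : nat -> bool) j := if a j then 0%N else 2%N.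
Definition c2 := fun _ : nat => 2%N.
Definition pK (a : nat -> bool) : pt R := (0, dsum 5 (ey a), dsum 5 c2).

Lemma q5 : (1 < 5)%N. Proof. by []. Qed.
Lemma dig_ey a : dig 5 (ey a). Proof. by move=> j; rewrite /ey; case: (a j). Qed.
Lemma dig_c2 : dig 5 c2. Proof. by []. Qed.

Lemma pK_I a : I (pK a).
Proof.
rewrite /unit_cube /pK /=; split; first by rewrite lexx ler01.
by split; apply: (dsum_01 5 q5); [exact: dig_ey|exact: dig_c2].
Qed.

Lemma pK_Tw k a : Tw a k I (pK a).
Proof.
elim: k a => [|k IH] a; first exact: pK_I.
rewrite Tw_shift; apply/TE; exists (0%N, ey a 0%N, 2%N); first by rewrite /ey; case: (a 0%N).
suff -> : ginv (0%N, ey a 0%N, 2%N) (pK a) = pK (sh a) by apply: IH.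
have E1 : dsum 5 (ey a) = ((ey a 0%N)%:R + dsum 5 (ey (sh a))) / 5 :> R
  := dsum_cons 5 q5 _ (dig_ey a).
have E2 : dsum 5 c2 = ((2%N)%:R + dsum 5 c2) / 5 :> R := dsum_cons 5 q5 _ dig_c2.
rewrite /ginv /pK /=; congr (_,_,_); first by rewrite mulr0 subr0.
  by rewrite {1}E1; field.
by rewrite {1}E2; field.
Qed.

Lemma Kc_pK a : Kc a (pK a).
Proof. by move=> k; apply: pK_Tw. Qed.

Definition sc n (c : nat * nat * nat) p : pt R :=
  (((c.1.1)%:R + p.1.1) / 5 ^+ n, ((c.1.2)%:R + p.1.2) / 5 ^+ n, ((c.2)%:R + p.2) / 5 ^+ n).

Lemma sc0 p : sc 0 (0%N, 0%N, 0%N) p = p.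
Proof. by case: p => [[x y] z]; rewrite /sc /= expr0 !divr1 !add0r. Qed.

Lemma scS n c d p : sc n c (fd d p) =
  sc n.+1 (5 * c.1.1 + d.1.1, 5 * c.1.2 + d.1.2, 5 * c.2 + d.2)%N p.
Proof.
rewrite /sc /fd /= !natrD !exprS.
by congr (_,_,_); field; rewrite expf_neq0.
Qed.

Lemma TwRep a n X p : Tw a n X p -> exists c, exists2 x, X x &
  p = sc n c x /\ (forall Y y, Y y -> Tw a n Y (sc n c y)).
Proof.
elim: n X p => [|n IH] X p.
  move=> Xp; exists (0%N, 0%N, 0%N); exists p => //; rewrite sc0; split => // Y y.
  by rewrite sc0.
move=> /= /IH [c [t [d [Dd [x [Xx ->]]]] [-> HY]]].
exists (5 * c.1.1 + d.1.1, 5 * c.1.2 + d.1.2, 5 * c.2 + d.2)%N; exists x => //.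
split; first by rewrite scS.
move=> Y y Yy /=; rewrite -scS; apply: HY.
by exists d; split => //; exists y.
Qed.

Definition sq (x : R) := x ^+ 2.

Lemma edist_ge2 p p' : `|p.1.2 - p'.1.2| <= Defs.edist p p'.
Proof.
rewrite /Defs.edist -sqrtr_sqr ler_sqrt; last first.
  by rewrite !addr_ge0 // sqr_ge0.
have := sqr_ge0 (p.1.1 - p'.1.1); have := sqr_ge0 (p.2 - p'.2); lra.
Qed.

Lemma edist_ge3 p p' : `|p.2 - p'.2| <= Defs.edist p p'.
Proof.
rewrite /Defs.edist -sqrtr_sqr ler_sqrt; last first.
  by rewrite !addr_ge0 // sqr_ge0.
have := sqr_ge0 (p.1.1 - p'.1.1); have := sqr_ge0 (p.1.2 - p'.1.2); lra.
Qed.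

Lemma edistC p p' : Defs.edist p p' = Defs.edist p' p.
Proof. by rewrite /Defs.edist -!(sqrrN (p.1.1 - _)) -!(sqrrN (p.1.2 - _)) -(sqrrN (p.2 - _)) !opprB. Qed.

Lemma edist_le p p' s : 0 <= s -> `|p.1.1 - p'.1.1| <= s -> `|p.1.2 - p'.1.2| <= s ->
  `|p.2 - p'.2| <= s -> Defs.edist p p' <= 2 * s.
Proof.
move=> s0 h1 h2 h3.
have -> : 2 * s = Num.sqrt ((2 * s) ^+ 2) by rewrite sqrtr_sqr ger0_norm // mulr_ge0.
rewrite ler_sqrt; last by rewrite sqr_ge0.
have e1 := normr_ge0 (p.1.1 - p'.1.1); have e2 := normr_ge0 (p.1.2 - p'.1.2).
have e3 := normr_ge0 (p.2 - p'.2).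
rewrite -(real_normK (num_real (p.1.1 - p'.1.1))) -(real_normK (num_real (p.1.2 - p'.1.2))).
rewrite -(real_normK (num_real (p.2 - p'.2))).
nra.
Qed.

Lemma edist_ge0 p p' : 0 <= Defs.edist p p'.
Proof. exact: sqrtr_ge0. Qed.

Lemma edist0 p : Defs.edist p p = 0.
Proof. by rewrite /Defs.edist !subrr expr0n /= !addr0 sqrtr0. Qed.

Lemma key (N c d : nat) (r u : R) : in04 d -> 0 <= r <= 1 -> 0 <= u <= 1 ->
  1 <= `|(5 * N%:R + 2 + r) - (5 * c%:R + d%:R + u)|.
Proof.
move=> /orP [/eqP->|/eqP->] /andP[r0 r1] /andP[u0 u1]; rewrite ler_normr; apply/orP.
- case: (leqP c N) => h.
    have : c%:R <= N%:R :> R by rewrite ler_nat.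
    by move=> ?; left; lra.
  have : N%:R + 1 <= c%:R :> R by rewrite natr1 ler_nat.
  by move=> ?; right; lra.
- case: (ltnP c N) => h.
    have : c%:R + 1 <= N%:R :> R by rewrite natr1 ler_nat.
    by move=> ?; left; lra.
  have : N%:R <= c%:R :> R by rewrite ler_nat.
  by move=> ?; right; lra.
Qed.

Lemma coord_sep (e : nat -> nat) n (c d : nat) (u : R) : dig 5 e -> e n = 2%N ->
  in04 d -> 0 <= u <= 1 ->
  (5 ^+ n.+1)^-1 <= `|dsum 5 e - (c%:R + (d%:R + u) / 5) / 5 ^+ n|.
Proof.
move=> he en d04 u01.
have h1 := dsum_ge (R:=R) 5 q5 n.+1 he; have h2 := dsum_le (R:=R) 5 q5 n.+1 he.
have [N HN] := psum_nat (R:=R) 5 q5 n e.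
rewrite (psum_S 5 q5) en in h1 h2.
set Y := dsum 5 e in h1 h2 *.
set r := (Y - psum 5 n e - 2%:R / 5%:R ^+ n.+1) * 5 ^+ n.+1.
have M0 : 0 < 5 ^+ n.+1 :> R by rewrite exprn_gt0.
have r01 : 0 <= r <= 1.
  rewrite /r; apply/andP; split; first by rewrite mulr_ge0 // ?subr_ge0 ?(ltW M0) //; lra.
  rewrite -ler_pdivlMr //; rewrite mul1r; lra.
have := key N c d r u d04 r01 u01.
have -> : (5 * N%:R + 2 + r) - (5 * c%:R + d%:R + u) =
   (Y - (c%:R + (d%:R + u) / 5) / 5 ^+ n) * 5 ^+ n.+1.
  rewrite /r -HN !exprS; field; by rewrite expf_neq0.
by rewrite normrM (ger0_norm (ltW M0)) -ler_pdivrMr // div1r.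
Qed.

Lemma frame_yz {d} : Dframe d -> in04 d.1.2 || in04 d.2.
Proof.
case: d => [[x y] z] /= /and4P [_ _ _] /or3P [/andP[_ ->]|/andP[_ ->]|/andP[-> _]] //.
by rewrite orbT.
Qed.

Lemma sep {a b n y} : a n = false -> b n = true -> Kc b y ->
  (5 ^+ n.+1)^-1 <= Defs.edist (pK a) y.
Proof.
move=> an bn /(_ n) /=; rewrite bn => /TwRep [c [t [d [Dd [u [Iu ->]]]] [-> _]]].
case: Iu => _ [u2 u3].
case/orP: (frame_yz Dd) => hd.
- apply: le_trans (edist_ge2 _ _); rewrite /pK /sc /=.
  by apply: coord_sep => //; [exact: dig_ey|rewrite /ey an].
- apply: le_trans (edist_ge3 _ _); rewrite /pK /sc /=.
  by apply: coord_sep => //; exact: dig_c2.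
Qed.

Lemma Kc_inj a b : @Kc R a = Kc b -> a = b.
Proof.
move=> e; apply: funext => n; apply: contrapT => ne.
have M0 : 0 < (5 ^+ n.+1)^-1 :> R by rewrite invr_gt0 exprn_gt0.
move: ne; case an: (a n); case bn: (b n) => // _.
- have := sep bn an (_ : Kc a (pK b)); rewrite edist0 => /(_ _) h.
  by have := h ltac:(rewrite e; exact: Kc_pK); lra.
- have := sep an bn (_ : Kc b (pK a)); rewrite edist0 => /(_ _) h.
  by have := h ltac:(rewrite -e; exact: Kc_pK); lra.
Qed.

End Geo.


Section Haus.
Context {R : realType}.
Local Notation I := (@unit_cube R).
Implicit Types (X Y A B : set (pt R)) (p : pt R).

Definition shn n (a : nat -> bool) := fun j => a (n + j)%N.

Lemma KcTw a n : @Kc R a = Tw a n (Kc (shn n a)).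
Proof.
elim: n a => [|n IH] a.
  by rewrite /=; congr Kc; apply: funext => j; rewrite /shn add0n.
rewrite Tw_shift Kc_shift (IH (sh a)); congr (T _ (Tw _ _ (Kc _))).
Qed.

Lemma Tw_ext a b n X : (forall j, (j < n)%N -> a j = b j) -> Tw a n X = Tw b n X.
Proof.
elim: n X => [//|n IH] X h /=; rewrite (h n) //; apply: IH => j jn; apply: h.
exact: ltnW.
Qed.

Lemma diff_sc (cc x y M : R) : 0 < M -> 0 <= x <= 1 -> 0 <= y <= 1 ->
  `|(cc + x) / M - (cc + y) / M| <= M^-1.
Proof.
move=> M0 hx hy.
have -> : (cc + x) / M - (cc + y) / M = (x - y) * M^-1 by field; rewrite gt_eqF.
rewrite normrM (ger0_norm (ltW (_ : 0 < M^-1))) ?invr_gt0 //.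
rewrite -[X in _ <= X]mul1r; apply: ler_wpM2r; first by rewrite invr_ge0 ltW.
rewrite ler_norml; apply/andP; split; lra.
Qed.

Lemma closeK a b n x : (forall j, (j < n)%N -> a j = b j) -> Kc a x ->
  exists2 y, Kc b y & Defs.edist x y <= 2 * (5 ^+ n)^-1 :> R.
Proof.
move=> h; rewrite (KcTw a n) => /TwRep [c [x0 Kx0 [-> HY]]].
exists (sc n c (pK (shn n b))).
  by rewrite (KcTw b n) -(Tw_ext _ _ _ _ h); apply: HY; apply: Kc_pK.
have M0 : 0 < 5 ^+ n :> R by rewrite exprn_gt0.
have [h1 [h2 h3]] := Kc_I _ _ Kx0.
have [g1 [g2 g3]] := pK_I (R:=R) (shn n b).
apply: edist_le; first by rewrite invr_ge0 ltW.
- exact: diff_sc.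
- exact: diff_sc.
- exact: diff_sc.
Qed.

Definition hset A B := [set r : R | 0 <= r /\
         (forall a, A a -> exists2 b, B b & Defs.edist a b <= r) /\
         (forall b, B b -> exists2 a, A a & Defs.edist a b <= r)].

Lemma hausE A B : hausdorff A B = inf (hset A B).
Proof. by []. Qed.

Lemma I_close p p' : I p -> I p' -> Defs.edist p p' <= 2.
Proof.
move=> [/andP[? ?] [/andP[? ?] /andP[? ?]]] [/andP[? ?] [/andP[? ?] /andP[? ?]]].
rewrite -[2]mulr1; apply: edist_le => //; rewrite ler_norml; apply/andP; split; lra.
Qed.

Lemma hset2 A B : A `<=` I -> B `<=` I -> A !=set0 -> B !=set0 -> hset A B 2.
Proof.
move=> AI BI [a0 Aa0] [b0 Bb0]; split => //; split.
- by move=> a Aa; exists b0 => //; apply: I_close; [apply: AI|apply: BI].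
- by move=> b Bb; exists a0 => //; apply: I_close; [apply: AI|apply: BI].
Qed.

Lemma h_lb1 A B r : A `<=` I -> B `<=` I -> A !=set0 -> B !=set0 ->
  (exists2 a, A a & forall b, B b -> r <= Defs.edist a b) -> r <= hausdorff A B.
Proof.
move=> AI BI An Bn [a Aa ha]; rewrite hausE; apply: lb_le_inf.
  by exists 2; apply: hset2.
move=> s [_ [/(_ a Aa) [b Bb hb] _]]; exact: le_trans (ha b Bb) hb.
Qed.

Lemma h_lb2 A B r : A `<=` I -> B `<=` I -> A !=set0 -> B !=set0 ->
  (exists2 b, B b & forall a, A a -> r <= Defs.edist a b) -> r <= hausdorff A B.
Proof.
move=> AI BI An Bn [b Bb hb]; rewrite hausE; apply: lb_le_inf.
  by exists 2; apply: hset2.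
move=> s [_ [_ /(_ b Bb) [a Aa ha]]]; exact: le_trans (hb a Aa) ha.
Qed.

Lemma h_ge0 A B : A `<=` I -> B `<=` I -> A !=set0 -> B !=set0 -> 0 <= hausdorff A B.
Proof.
move=> AI BI An Bn; apply: h_lb1 => //; case: An => a Aa; exists a => // b _.
exact: sqrtr_ge0.
Qed.

Lemma h_ub A B r : 0 <= r ->
  (forall a, A a -> exists2 b, B b & Defs.edist a b <= r) ->
  (forall b, B b -> exists2 a, A a & Defs.edist a b <= r) -> hausdorff A B <= r.
Proof.
move=> r0 h1 h2; rewrite hausE; apply: ge_inf; last by split.
by exists 0 => s [].
Qed.

End Haus.


Section Cantor.
Context {R : realType}.

Definition xe (a : nat -> bool) j := if a j then 2%N else 0%N.
Definition xc (a : nat -> bool) : R := dsum 3 (xe a).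
Definition bcons (b : bool) (a : nat -> bool) := fun n => if n is n'.+1 then a n' else b.

Lemma q3 : (1 < 3)%N. Proof. by []. Qed.
Lemma dig_xe a : dig 3 (xe a). Proof. by move=> j; rewrite /xe; case: (a j). Qed.

Lemma xc_sh a : xc a = ((xe a 0%N)%:R + xc (sh a)) / 3.
Proof. exact: (dsum_cons 3 q3 _ (dig_xe a)). Qed.

Lemma xc_cons0 a : xc (bcons false a) = S0 (xc a).
Proof. by rewrite xc_sh /S0 /= add0r. Qed.

Lemma xc_cons1 a : xc (bcons true a) = S1 (xc a).
Proof. by rewrite xc_sh /S1 /xe /= (_ : sh (bcons true a) = a) //; field. Qed.

Lemma xc_01 a : 0 <= xc a <= 1.
Proof. exact: (dsum_01 3 q3 (dig_xe a)). Qed.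

Lemma xc_close a b n : (forall j, (j < n)%N -> a j = b j) ->
  `|xc a - xc b| <= (3 ^+ n)^-1.
Proof.
move=> h.
have e : psum 3 n (xe a) = psum 3 n (xe b) :> R.
  by apply: psum_ext => j jn; rewrite /xe h.
have := dsum_ge (R:=R) 3 q3 n (dig_xe a); have := dsum_le (R:=R) 3 q3 n (dig_xe a).
have := dsum_ge (R:=R) 3 q3 n (dig_xe b); have := dsum_le (R:=R) 3 q3 n (dig_xe b).
rewrite /xc e => h1 h2 h3 h4; rewrite ler_norml; apply/andP; split; lra.
Qed.

Lemma xc_sep {a b n} : (forall j, (j < n)%N -> a j = b j) -> a n = true -> b n = false ->
  xc b + (3 ^+ n.+1)^-1 <= xc a.
Proof.
move=> h an bn.
have e : psum 3 n (xe a) = psum 3 n (xe b) :> R.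
  by apply: psum_ext => j jn; rewrite /xe h.
have h1 := dsum_ge (R:=R) 3 q3 n.+1 (dig_xe a).
have h2 := dsum_le (R:=R) 3 q3 n.+1 (dig_xe b).
rewrite !(psum_S 3 q3) /xe an bn e in h1 h2.
rewrite /xc /xe; move: h1 h2; rewrite mul0r addr0.
set P := psum 3 n _; set Z := (3 ^+ n.+1)^-1.
have : 0 <= Z by rewrite /Z invr_ge0 exprn_ge0.
lra.
Qed.

Lemma fdiff (a b : nat -> bool) : (exists j, a j != b j) ->
  exists n, [/\ forall j, (j < n)%N -> a j = b j, a n != b n &
     forall j, a j != b j -> (n <= j)%N].
Proof.
move=> ex; case: (ex_minnP ex) => n hn hmin; exists n; split => //.
move=> j jn; apply/eqP; apply: contraT => ne.
by have := hmin j ne; rewrite leqNgt jn.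
Qed.

Lemma xc_inj a b : xc a = xc b -> a = b.
Proof.
move=> e; apply: funext => j; apply: contrapT => ne.
have [n [h1 h2 _]] : exists n, [/\ forall j, (j < n)%N -> a j = b j, a n != b n &
     forall j, a j != b j -> (n <= j)%N].
  by apply: fdiff; exists j; apply/eqP.
have Z0 : 0 < (3 ^+ n.+1)^-1 :> R by rewrite invr_gt0 exprn_gt0.
move: h2; case an: (a n); case bn: (b n) => // _.
- have := xc_sep h1 an bn; rewrite e; lra.
- have := xc_sep (fun j jn => esym (h1 j jn)) bn an; rewrite e; lra.
Qed.

Lemma xc_far a b n : `|xc a - xc b| < (3 ^+ n)^-1 -> forall j, (j < n)%N -> a j = b j.
Proof.
move=> hlt; apply: contrapT => hne.
have [j [jn ne]] : exists j, (j < n)%N /\ a j != b j.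
  apply: contrapT => hh; apply: hne => j jn; apply/eqP; apply: contrapT => ne.
  by apply: hh; exists j; split => //; apply/negP.
have [m [h1 h2 h3]] := fdiff a b (ex_intro _ j ne).
have mn : (m.+1 <= n)%N by apply: leq_ltn_trans (h3 j ne) jn.
have hZ : (3 ^+ n)^-1 <= (3 ^+ m.+1)^-1 :> R.
  rewrite lef_pV2 ?posrE ?exprn_gt0 // -!natrX ler_nat leq_pexp2l //.
move: h2; case an: (a m); case bn: (b m) => // _.
- have := xc_sep h1 an bn; move: hlt; rewrite ltr_norml; lra.
- have := xc_sep (fun j jn => esym (h1 j jn)) bn an; move: hlt; rewrite ltr_norml; lra.
Qed.

Lemma cs_01 n x : @cantor_step R n x -> 0 <= x <= 1.
Proof.
elim: n x => [//|n IH] x [] [t /IH /andP[t0 t1] <-]; rewrite /S0 /S1;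
  apply/andP; split; lra.
Qed.

Lemma xc_cantor a : @cantor R (xc a).
Proof.
move=> n; elim: n a => [|n IH] a; first exact: xc_01.
rewrite xc_sh /xe; case: (a 0%N) => /=.
- right; exists (xc (sh a)); first exact: IH.
  by rewrite /S1; field.
- left; exists (xc (sh a)); first exact: IH.
  by rewrite /S0 add0r.
Qed.

Definition shift3 (x : R) := if 2^-1 <= x then 3 * x - 2 else 3 * x.
Definition ccode (x : R) j := 2^-1 <= iter j shift3 x.

Lemma cantor_shift x : @cantor R x -> cantor (shift3 x).
Proof.
move=> cx n; have i2 : (2:R)^-1 * 2 = 1 by rewrite mulVf.
have i3 : (3:R)^-1 * 3 = 1 by rewrite mulVf.
have := cx n.+1; rewrite /shift3.
case: ifPn => hx [] [t ct Et]; subst x; have := cs_01 _ _ ct => /andP[t0 t1]; rewrite /S0 /S1 in hx *.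
- exfalso; lra.
- by rewrite (_ : 3 * _ - 2 = t) //; field.
- by rewrite (_ : 3 * _ = t) //; field.
- exfalso; move: hx; rewrite -ltNge => hx; lra.
Qed.

Lemma code_ok k x : @cantor R x ->
  psum 3 k (xe (ccode x)) <= x <= psum 3 k (xe (ccode x)) + (3 ^+ k)^-1.
Proof.
elim: k x => [|k IH] x cx.
have i2 : (2:R)^-1 * 2 = 1 by rewrite mulVf.
have i3 : (3:R)^-1 * 3 = 1 by rewrite mulVf.
  by rewrite /= expr0 invr1 add0r; exact: (cs_01 _ _ (cx 0%N)).
rewrite psum_cons (psum_ext 3 k _ (xe (ccode (shift3 x)))); last first.
  by move=> j _; rewrite /xe /ccode iterSr.
have := IH _ (cantor_shift _ cx).
set P := psum 3 k _; rewrite exprS invfM.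
rewrite /xe /ccode /= /shift3.
case: ifP => hx /andP [h1 h2]; apply/andP; split; lra.
Qed.

Lemma xc_code x : @cantor R x -> xc (ccode x) = x.
Proof.
by move=> cx; symmetry; apply: (dsum_uniq 3 q3 _ _ (dig_xe _)) => k; apply: code_ok.
Qed.

End Cantor.


Section Topo.
Context {R : realType}.
Local Notation I := (@unit_cube R).
Implicit Types (X Y A B : set (pt R)) (p : pt R).

Lemma pc (T U V : topologicalType) (f : T -> U) (g : T -> V) :
  continuous f -> continuous g -> continuous (fun x => (f x, g x)).
Proof.
move=> cf cg x.
exact: (cvg_pair (FF := nbhs_filter x) (FG := nbhs_filter (f x)) (FH := nbhs_filter (g x)) (cf x) (cg x)).
Qed.

Lemma c11 : continuous (fun p : pt R => p.1.1).
Proof. move=> p. apply: cvg_comp; first exact: cvg_fst. exact: cvg_fst. Qed.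
Lemma c12 : continuous (fun p : pt R => p.1.2).
Proof. move=> p. apply: cvg_comp; first exact: cvg_fst. exact: cvg_snd. Qed.
Lemma c3c : continuous (fun p : pt R => p.2).
Proof. move=> p. exact: cvg_snd. Qed.
Lemma aff (a : R) (f : pt R -> R) : continuous f -> continuous (fun p => 5 * f p - a).
Proof.
move=> cf p. apply: cvgB; last exact: cvg_cst. apply: cvgM; [exact: cvg_cst|exact: cf].
Qed.

Lemma ginv_cont d : continuous (@ginv R d).
Proof.
apply: pc; [apply: pc|]; apply: aff; [exact: c11|exact: c12|exact: c3c].
Qed.

Lemma T_closed i A : closed A -> closed (T i A).
Proof.
move=> cA.
have -> : T i A = \bigcup_(d in [set d | Dig i d]) (ginv d @^-1` A).
  apply/seteqP; split => p.
    by move=> /TE [d Dd Ap]; exists d.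
  by move=> [d Dd Ap]; apply/TE; exists d.
apply: closed_bigcup.
  apply: (@sub_finite_set _ _ (`I_5 `*` `I_5 `*` `I_5)).
    by move=> d /= /Dig_lt5 [h1 h2 h3].
  by apply: finite_setX; [apply: finite_setX|]; apply: finite_II.
move=> d _; exact: (continuous_closedP _).1 (ginv_cont d) _ cA.
Qed.

Lemma Tw_closed a k A : closed A -> closed (Tw a k A).
Proof. by elim: k A => [//|k IH] A cA /=; apply: IH; apply: T_closed. Qed.

Lemma I_compact : compact I.
Proof.
have -> : I = `[0, 1] `*` `[0, 1] `*` `[0, 1].
  apply/seteqP; split => -[[x y] z]; rewrite /unit_cube /= !in_itv /=.
    by case=> [h1 [h2 h3]].
  by case=> [[h1 h2] h3].
by apply: compact_setX; [apply: compact_setX|]; apply: segment_compact.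
Qed.

Lemma I_closed : closed I.
Proof. by apply: compact_closed => //; exact: I_compact. Qed.

Lemma Kc_compact a : compact (@Kc R a).
Proof.
apply: (subclosed_compact _ I_compact); last exact: Kc_I.
have -> : Kc a = \bigcap_(k in [set: nat]) Tw a k.+1 I.
  by apply/seteqP; split => p h k //; apply: h.
apply: closed_bigI => k _; apply: Tw_closed; exact: I_closed.
Qed.

End Topo.


Section Final.
Context {R : realType}.

Definition phiQ (A : set (pt R)) : R :=
  match pselect (exists a, A = Kc a) with
  | left h => xc (proj1_sig (cid h))
  | right _ => 0
  end.

Lemma phi_Kc a : phiQ (Kc a) = xc a.
Proof.
rewrite /phiQ; case: pselect => [h|n]; last by exfalso; apply: n; exists a.
by case: (cid h) => b /= e; rewrite (Kc_inj _ _ e).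
Qed.

Lemma T_cons b a : T b (@Kc R a) = Kc (bcons b a).
Proof. by rewrite [RHS]Kc_shift. Qed.

Lemma haus_lb a b n : a n != b n ->
  (5 ^+ n.+1)^-1 <= hausdorff (@Kc R a) (Kc b).
Proof.
have KI := @Kc_I R; have Kn := fun c => ex_intro _ _ (@Kc_pK R c).
case an: (a n); case bn: (b n) => // _.
- apply: h_lb2 => //; exists (pK b); first exact: Kc_pK.
  by move=> x Kx; rewrite edistC; apply: sep bn an Kx.
- apply: h_lb1 => //; exists (pK a); first exact: Kc_pK.
  by move=> y Ky; apply: sep an bn Ky.
Qed.

Lemma holder_step (h : R) n : (5 ^+ n.+1)^-1 <= h ->
  (3 ^+ n)^-1 <= 3 * h `^ 2^-1.
Proof.
move=> hh.
have p5 : 0 <= (5 ^+ n.+1)^-1 :> R by rewrite invr_ge0 exprn_ge0.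
have p3 : 0 <= (3 ^+ n.+1)^-1 :> R by rewrite invr_ge0 exprn_ge0.
have h1 : (5 ^+ n.+1)^-1 `^ 2^-1 <= h `^ 2^-1.
  apply: ge0_ler_powR => //; rewrite ?invr_ge0 // nnegrE //; exact: le_trans hh.
rewrite powR12_sqrt // in h1.
have h2 : (3 ^+ n.+1)^-1 <= Num.sqrt ((5 ^+ n.+1)^-1) :> R.
  rewrite -[X in X <= _](ger0_norm p3) -sqrtr_sqr ler_sqrt //.
  rewrite -exprVn -exprM mulnC exprM !exprVn lef_pV2 ?posrE ?exprn_gt0 //.
  rewrite -!natrX ler_nat leq_exp2r //.
have -> : (3 ^+ n)^-1 = 3 * (3 ^+ n.+1)^-1 :> R.
  by rewrite exprS invfM; field; rewrite expf_neq0.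
apply: ler_wpM2l => //; exact: le_trans h2 h1.
Qed.

End Final.

Theorem theorem3 (R : realType) :
  (* Q is a subset of C(R^3) *)
  (forall alpha : nat -> bool,
      @Kc R alpha !=set0 /\ compact (@Kc R alpha : set (R * R * R))) /\
  (* Q = T~_0(Q) u T~_1(Q) *)
  @Qc R = (T false @` @Qc R) `|` (T true @` @Qc R) /\
  (* a Hoelder homeomorphism phi : Q -> C_{1/3} conjugating T~_i to S_i *)
  exists phi : set (pt R) -> R,
    (forall A B, @Qc R A -> @Qc R B -> phi A = phi B -> A = B) /\
    phi @` @Qc R = @cantor R /\
    (exists (C gamma : R), 0 < gamma /\
       forall A B, @Qc R A -> @Qc R B ->
         `|phi A - phi B| <= C * (hausdorff A B) `^ gamma) /\
    (forall A, @Qc R A -> forall eps : R, 0 < eps ->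
       exists2 delta : R, 0 < delta &
         forall B, @Qc R B -> `|phi A - phi B| < delta ->
           hausdorff A B < eps) /\
    (forall A, @Qc R A ->
       phi (T false A) = S0 (phi A) /\ phi (T true A) = S1 (phi A)).
Proof.
split.
  move=> a; split; [by exists (pK a); exact: Kc_pK|exact: Kc_compact].
split.
  apply/seteqP; split => A.
    move=> [a ->]; rewrite Kc_shift; case: (a 0%N); [right|left];
      by exists (Kc (sh a)) => //; exists (sh a).
  by move=> [[X [a ->] <-]|[X [a ->] <-]]; [exists (bcons false a)|exists (bcons true a)];
    rewrite T_cons.
exists phiQ; split.
  by move=> A B [a ->] [b ->]; rewrite !phi_Kc => /xc_inj ->.
split.
  apply/seteqP; split => x.
    by move=> [A [a ->] <-]; rewrite phi_Kc; exact: xc_cantor.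
  move=> cx; exists (Kc (ccode x)); first by exists (ccode x).
  by rewrite phi_Kc xc_code.
split.
  exists 3, (2^-1); split; first by rewrite invr_gt0.
  move=> A B [a ->] [b ->]; rewrite !phi_Kc.
  case: (pselect (a = b)) => [<-|ne].
    by rewrite subrr normr0; apply: mulr_ge0 => //; exact: powR_ge0.
  have [n [h1 h2 _]] : exists n, [/\ forall j, (j < n)%N -> a j = b j, a n != b n &
     forall j, a j != b j -> (n <= j)%N].
    apply: fdiff; apply: contrapT => hh; apply: ne; apply: funext => j.
    by apply/eqP; apply: contrapT => nj; apply: hh; exists j; apply/negP.
  apply: le_trans (xc_close _ _ _ h1) _.
  exact: holder_step _ _ (haus_lb _ _ _ h2).
split.
  move=> A [a ->] eps e0.
  have ie : 0 <= 2 / eps by rewrite divr_ge0 // ltW.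
  have hk1 := archi_boundP ie.
  set n := Num.Def.archi_bound _ in hk1.
  have hn : 2 * (5 ^+ n)^-1 < eps :> R.
    have hk2 : (n < 5 ^ n)%N by apply: ltn_expl.
    have hk3 : 2 / eps < 5 ^+ n :> R.
      by apply: lt_trans hk1 _; rewrite -natrX ltr_nat.
    have M0 : 0 < 5 ^+ n :> R by rewrite exprn_gt0.
    rewrite ltr_pdivrMr //; rewrite ltr_pdivrMr // in hk3; by rewrite mulrC.
  exists (3 ^+ n)^-1; first by rewrite invr_gt0 exprn_gt0.
  move=> B [b ->]; rewrite !phi_Kc => hlt.
  have h := xc_far _ _ _ hlt.
  apply: le_lt_trans hn; apply: h_ub.
  - by rewrite mulr_ge0 // invr_ge0 exprn_ge0.
  - by move=> x Kx; apply: (closeK _ _ _ _ h Kx).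
  - move=> y Ky; have [x Kx hx] := closeK _ _ _ _ (fun j jn => esym (h j jn)) Ky.
    by exists x => //; rewrite edistC.
move=> A [a ->]; split.
  by rewrite T_cons !phi_Kc xc_cons0.
by rewrite T_cons !phi_Kc xc_cons1.
Qed.
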